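(* Let $n\ge1$ and $\alpha,\beta\in(0,1]$. The following two properties hold. (a) For all $\mathcal{C},\mathcal{C}'\in\{\bullet,\circ\}^n$ and every $\widehat{T}\in\mathcal{F}(\mathcal{C}'\to\mathcal{C})$, we have $\hat\mu(\widehat{T})=\mu(f(\widehat{T}))\,W(\mathcal{C}'\to\mathcal{C})$. (b) For every $\widehat{T}\in\widehat{\mathcal{T}}_n$, we have $\hat\mu(\pi(\widehat{T}))=\hat\mu(\widehat{T})$.
   Context: Open-boundary TASEP on $n$ sites: this is the continuous-time Markov chain on $\{\bullet,\circ\}^n$ (strings of length $n$, where $\bullet$ denotes a particle and $\circ$ a hole). Its transition rates are as follows, with $\mathcal{A},\mathcal{A}'$ arbitrary strings: - $W(\circ\mathcal{A}\to\bullet\mathcal{A})=\alpha$; - $W(\mathcal{A}\bullet\to\mathcal{A}\circ)=\beta$; - $W(\mathcal{A}\bullet\circ\mathcal{A}'\to\mathcal{A}\circ\bullet\mathcal{A}')=1$; - $W(\mathcal{C}\to\mathcal{C}')=0$ for all other pairs. A plane binary tree is a finite rooted tree in which every vertex is either an endpoint (a leaf, with no children) or has exactly two children, an ordered left child and right child. Every non-root vertex is thus either a left descendent or a right descendent of its parent. The endpoints are ordered from left to right in the planar order. $\mathcal{T}_n$ denotes the set of plane binary trees with exactly $n+2$ endpoints. The reduced configuration of $T\in\mathcal{T}_n$ is $R(T)=(t_1,\dots,t_n)\in\{\bullet,\circ\}^n$. Here $t_k=\bullet$ if the $(k+1)$-th endpoint from the left is a left child, and $t_k=\circ$ if it is a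 right child. The leftmost and rightmost endpoints are ignored. $l(T)$ (respectively $r(T)$) is the number of vertices lying strictly between the leftmost (respectively rightmost) endpoint and the root on the path joining them, excluding both the endpoint and the root. Set $\mu(T)=\alpha^{-l(T)}\beta^{-r(T)}$. A last branching vertex of a plane binary tree is a non-endpoint vertex both of whose children are endpoints. A marked tree is a pair $(T,v)$ with $T\in\mathcal{T}_n$ and $v$ a last branching vertex of $T$. The set of marked trees is $\widehat{\mathcal{T}}_n$. The map $f:\widehat{\mathcal{T}}_n\to\mathcal{T}_n$, $f(T,v)=T$, forgets the mark. For $(T,v)\in\widehat{\mathcal{T}}_n$, define $l'(T,v)$ (respectively $r'(T,v)$) as the number of vertices other than $v$ lying strictly between the leftmost (respectively rightmost) endpoint and the root. Set $\hat\mu(T,v)=\alpha^{-l'(T,v)}\beta^{-r'(T,v)}$. Definition of $\pi:\widehat{\mathcal{T}}_n\to\widehat{\mathcal{T}}_n$. Let $(T,v)\in\widehat{\mathcal{T}}_n$, and let $a$ and $b$ be the left and right children of $v$ (both endpoints). Case 1: $v$ is a right child. - Delete the endpoint $a$ together with the edge $va$. The vertex $v$ and its remaining child $b$ are merged into a single endpoint, sitting at $v$'s position; this endpoint is a right child. - If $b$ was not the rightmost endpoint of $T$, replace the first right-child endpoint to the right of this new endpoint by a new internal vertex $w$ with two new endpoint children. - If $b$ was the rightmost endpoint of $T$, replace the rightmost left-child endpoint of the reduced tree by a new internal vertex $w$ with two new endpoint children. - In either sub-case, $\pi(T,v)=(T',w)$, where $T'$ is the resulting tree and the mark is on $w$.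 Case 2: $v$ is a left child. Apply the mirror image of Case 1, exchanging left and right. - Delete $b$ and the edge $vb$, merging $v$ and $a$ into an endpoint. - If $a$ was not the leftmost endpoint of $T$, graft a cherry $w$ onto the first left-child endpoint to its left. - Otherwise, graft the cherry $w$ onto the leftmost right-child endpoint. - Mark $w$. For $\mathcal{C},\mathcal{C}'\in\{\bullet,\circ\}^n$, define $\mathcal{F}(\mathcal{C}'\to\mathcal{C}):=(R\circ f)^{-1}\{\mathcal{C}'\}\cap(R\circ f\circ\pi)^{-1}\{\mathcal{C}\}$. *)

(* Defs.v *)
From HB Require Import structures.
From mathcomp Require Import all_boot all_order all_algebra.
Set Implicit Arguments. Unset Strict Implicit. Unset Printing Implicit Defensive.
Import Order.TTheory GRing.Theory Num.Theory.

Inductive tree := Leaf | Node of tree & tree.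

Fixpoint nleaves (T : tree) : nat :=
  match T with Leaf => 1 | Node l r => nleaves l + nleaves r end.

(* Vertices are addressed by paths from the root: false = go to left child,
   true = go to right child. *)
Definition vpath := seq bool.

Fixpoint subtree (T : tree) (p : vpath) : option tree :=
  match p, T with
  | [::], _ => Some T
  | false :: p', Node l _ => subtree l p'
  | true :: p', Node _ r => subtree r p'
  | _ :: _, Leaf => None
  end.

Fixpoint replace_at (T : tree) (p : vpath) (S : tree) : tree :=
  match p, T with
  | [::], _ => S
  | false :: p', Node l r => Node (replace_at l p' S) r
  | true :: p', Node l r => Node l (replace_at r p' S)
  | _ :: _, Leaf => Leaf
  end.

Fixpoint leaf_paths (T : tree) : seq vpath :=
  match T with
  | Leaf => [:: [::]]
  | Node l r => map (cons false) (leaf_paths l) ++ map (cons true) (leaf_paths r)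
  end.

Definition is_right (q : vpath) : bool := last false q.
Definition is_left (q : vpath) : bool := (q != [::]) && ~~ last true q.

Definition is_cherry (T : tree) (p : vpath) : bool :=
  match subtree T p with Some (Node Leaf Leaf) => true | _ => false end.

(* marked trees (T,v) in \hat T_n ; f is the first projection *)
Definition marked (n : nat) (X : tree * vpath) : bool :=
  (nleaves X.1 == n.+2) && is_cherry X.1 X.2.

Definition f (X : tree * vpath) : tree := X.1.

(* Reduced configuration: true = particle (endpoint is a left child),
   false = hole (right child); leftmost and rightmost endpoints ignored. *)
Definition Rconf (T : tree) : seq bool :=
  let ps := leaf_paths T in map is_left (take (size ps).-2 (behead ps)).

Definition between (q : vpath) : seq vpath :=
  [seq take k q | k <- iota 1 (size q).-1].

Definition leftmost (T : tree) : vpath := head [::] (leaf_paths T).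
Definition rightmost (T : tree) : vpath := last [::] (leaf_paths T).

Definition lT (T : tree) : nat := size (between (leftmost T)).
Definition rT (T : tree) : nat := size (between (rightmost T)).

Definition mu {R : unitRingType} (alpha beta : R) (T : tree) : R :=
  alpha ^- lT T * beta ^- rT T.

Definition l' (X : tree * vpath) : nat :=
  count (fun u => u != X.2) (between (leftmost X.1)).
Definition r' (X : tree * vpath) : nat :=
  count (fun u => u != X.2) (between (rightmost X.1)).

Definition muhat {R : unitRingType} (alpha beta : R) (X : tree * vpath) : R :=
  alpha ^- l' X * beta ^- r' X.

Definition cherry : tree := Node Leaf Leaf.

(* The map pi on marked trees (arbitrary but harmless on non-marked input). *)
Definition pi_map (X : tree * vpath) : tree * vpath :=
  let: (T, p) := X in
  if p is [::] then X else
  let ps := leaf_paths T in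
  let T' := replace_at T p Leaf in
  let ps' := leaf_paths T' in
  if last false p then
    (* Case 1: v is a right child; b = rcons p true *)
    let q := if rcons p true != last [::] ps then
               (* first right-child endpoint to the right of the new endpoint *)
               let i := index p ps' in
               nth [::] ps' (i.+1 + find is_right (drop i.+1 ps'))
             else
               (* rightmost left-child endpoint of the reduced tree *)
               nth [::] (rev ps') (find is_left (rev ps')) in
    (replace_at T' q cherry, q)
  else
    (* Case 2: v is a left child; a = rcons p false *)
    let q := if rcons p false != head [::] ps then
               (* first left-child endpoint to the left of the new endpoint *)
               let i := index p ps' in
               nth [::] (rev (take i ps')) (find is_left (rev (take i ps')))
             else
               (* leftmost right-child endpoint of the reduced tree *)
               nth [::] ps' (find is_right ps') in
    (replace_at T' q cherry, q).

(* TASEP transition rates W(C' -> C); true = particle, false = hole. *)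
Definition hop (C' C : seq bool) : bool :=
  has (fun k => (C' == take k C' ++ [:: true; false] ++ drop k.+2 C') &&
                (C == take k C' ++ [:: false; true] ++ drop k.+2 C'))
      (iota 0 (size C')).

Definition W {R : nzRingType} (alpha beta : R) (C' C : seq bool) : R :=
  (if (C' == false :: behead C') && (C == true :: behead C') then alpha
  else if (C' == rcons (take (size C').-1 C') true) &&
          (C == rcons (take (size C').-1 C') false) then beta
  else if hop C' C then 1%R
  else 0)%R.

Definition inF (n : nat) (C' C : seq bool) (X : tree * vpath) : bool :=
  [&& marked n X, Rconf (f X) == C' & Rconf (f (pi_map X)) == C].

(* Main.v *)
Require Import Defs.
From HB Require Import structures.
From mathcomp Require Import all_boot all_order all_algebra.
From mathcomp Require Import zify.
Import Order.TTheory GRing.Theory Num.Theory.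
Set Implicit Arguments. Unset Strict Implicit. Unset Printing Implicit Defensive.
Notation isl := Defs.is_left.
Notation isr := Defs.is_right.

Lemma size_lp T : size (leaf_paths T) = nleaves T.
Proof. by elim: T => //= l IHl r IHr; rewrite size_cat !size_map IHl IHr. Qed.

Lemma lp_nonnil l r : all (fun q : vpath => q != [::]) (leaf_paths (Node l r)).
Proof. by rewrite /= all_cat !all_map; apply/andP; split; apply/allP. Qed.

Lemma uniq_lp T : uniq (leaf_paths T).
Proof.
elim: T => //= l IHl r IHr; rewrite cat_uniq !map_inj_uniq //; last 2 first.
- by move=> x y [].
- by move=> x y [].
rewrite IHl IHr /= andbT; apply/hasPn => x /mapP [y _ ->].
by apply/mapP => [[z _]].
Qed.

Lemma lp_leaf T q : q \in leaf_paths T -> subtree T q = Some Leaf.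
Proof.
elim: T q => [|l IHl r IHr] q /=; first by rewrite inE => /eqP ->.
rewrite mem_cat => /orP [] /mapP [y Hy ->] /=; by [apply IHl | apply IHr].
Qed.

Lemma subtree_cat T u w :
  subtree T (u ++ w) = if subtree T u is Some U then subtree U w else None.
Proof.
elim: u T => [|[] u IH] [|l r] //=.
Qed.

Lemma nleaves_gt0 T : 0 < nleaves T.
Proof. elim: T => //= l IHl r _; exact: ltn_addr. Qed.

Lemma lp_cons T : exists x s, leaf_paths T = x :: s.
Proof.
have := nleaves_gt0 T; rewrite -size_lp.
case: (leaf_paths T) => [|x s] //= _; by exists x, s.
Qed.

Lemma head_lp T : all negb (head [::] (leaf_paths T)).
Proof.
elim: T => //= l IHl r IHr.
have [x [s E]] := lp_cons l.
by rewrite E /= in IHl *.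
Qed.

Lemma last_lp T : all id (last [::] (leaf_paths T)).
Proof.
elim: T => //= l IHl r IHr.
have [x [s E]] := lp_cons r.
rewrite E last_cat /= last_map /=.
by rewrite E /= in IHr.
Qed.

Lemma cherry_split T p : is_cherry T p ->
  exists A B, leaf_paths T = A ++ [:: rcons p false; rcons p true] ++ B /\
              leaf_paths (replace_at T p Leaf) = A ++ p :: B.
Proof.
rewrite /is_cherry.
elim: p T => [|b p IH] T /=.
  case: T => [|[|? ?] [|? ?]] //= _; by exists [::], [::].
case: T => [|l r]; case: b => //= H.
- have [A [B [E1 E2]]] := IH r H.
  exists (map (cons false) (leaf_paths l) ++ map (cons true) A), (map (cons true) B).
  by rewrite /= E1 E2 !map_cat -!catA.
- have [A [B [E1 E2]]] := IH l H.
  exists (map (cons false) A), (map (cons false) B ++ map (cons true) (leaf_paths r)).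
  by rewrite /= E1 E2 !map_cat -!catA.
Qed.

Lemma leaf_split T q : subtree T q = Some Leaf ->
  exists A B, leaf_paths T = A ++ q :: B /\
    leaf_paths (replace_at T q cherry) = A ++ [:: rcons q false; rcons q true] ++ B.
Proof.
elim: q T => [|b q IH] T /=.
  case: T => // _; by exists [::], [::].
case: T => [|l r]; case: b => //= H.
- have [A [B [E1 E2]]] := IH r H.
  exists (map (cons false) (leaf_paths l) ++ map (cons true) A), (map (cons true) B).
  by rewrite /= E1 E2 !map_cat -!catA.
- have [A [B [E1 E2]]] := IH l H.
  exists (map (cons false) A), (map (cons false) B ++ map (cons true) (leaf_paths r)).
  by rewrite /= E1 E2 !map_cat -!catA.
Qed.

Lemma leaf_replace T i : i < size (leaf_paths T) ->
  let q := nth [::] (leaf_paths T) i in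
  leaf_paths (replace_at T q cherry) =
    take i (leaf_paths T) ++ [:: rcons q false; rcons q true] ++ drop i.+1 (leaf_paths T).
Proof.
move=> Hi q.
have Hq : q \in leaf_paths T by apply: mem_nth.
have [A [B [E1 E2]]] := leaf_split (lp_leaf Hq).
have U := uniq_lp T.
have Hidx : index q (leaf_paths T) = i by rewrite index_uniq.
have HA : q \notin A by move: U; rewrite E1 cat_uniq /= => /and3P [_ /norP [] ].
have HsA : size A = i by rewrite -Hidx E1 index_pivot.
rewrite E2 E1 take_size_cat // -HsA.
have -> : A ++ q :: B = rcons A q ++ B by rewrite -cats1 -catA.
by rewrite drop_size_cat // size_rcons.
Qed.

Lemma subtree_replace T q U : subtree T q <> None -> subtree (replace_at T q U) q = Some U.
Proof. elim: q T => [|b q IH] [|l r] //= H; try by case: U. all: case: b H => //= H; exact: IH. Qed.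

Lemma replace_replace T q U V : subtree T q <> None ->
  replace_at (replace_at T q U) q V = replace_at T q V.
Proof. elim: q T => [|b q IH] [|l r] //= H; try by case: U. all: case: b H => //= H; by rewrite IH. Qed.

Lemma replace_id T q U : subtree T q = Some U -> replace_at T q U = T.
Proof. elim: q T => [|b q IH] [|l r] //=; try by case=> <-. all: case: b => //= H; by rewrite IH. Qed.

Lemma count_between (v h : vpath) :
  count (fun u => u != v) (between h) = (size h).-1 - (v \in between h).
Proof.
have Us : uniq (between h).
  rewrite map_inj_in_uniq ?iota_uniq // => i j; rewrite !mem_iota => /andP [Hi1 Hi] /andP [Hj1 Hj] E.
  have := congr1 size E; rewrite !size_take.
  have -> : i < size h by lia.
  by have -> : j < size h by lia.
rewrite -(count_uniq_mem _ Us).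
have E := count_predC (pred1 v) (between h).
rewrite [in RHS](_ : (size h).-1 = size (between h)); last by rewrite size_map size_iota.
rewrite -E addKn; apply: eq_count => u /=; by rewrite eq_sym.
Qed.

Lemma between_rcons (p : vpath) b : p != [::] -> p \in between (rcons p b).
Proof.
move=> Hp; apply/mapP; exists (size p).
  by rewrite size_rcons /= mem_iota add1n ltnSn andbT lt0n size_eq0.
by rewrite -cats1 take_size_cat.
Qed.

Lemma notin_between T v h : is_cherry T v -> h \in leaf_paths T ->
  h != rcons v false -> h != rcons v true -> v \notin between h.
Proof.
rewrite /is_cherry => Hc /lp_leaf Hh H0 H1; apply/negP => /mapP [k _ Ek].
move: Hh; rewrite -(cat_take_drop k h) -Ek subtree_cat.
case E: (subtree T v) Hc => [[|[|? ?] [|? ?]]|] //= _.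
have Eh : h = v ++ drop k h by rewrite Ek cat_take_drop.
move: H0 H1; rewrite {1 2}Eh; move: (drop k h) => d.
case: d => [|b [|c w]] //=; case: b => //=; try by case: c.
all: by rewrite !cats1 !eqxx.
Qed.

Lemma uniq4 (A B : seq vpath) x y : uniq (A ++ [:: x; y] ++ B) ->
  [/\ x \notin A, y \notin A, x \notin B & y \notin B].
Proof.
rewrite cat_uniq => /and3P [_ H1 H2].
move: H1; rewrite /= !negb_or => /and3P [-> -> _].
move: H2; rewrite /= !inE !negb_or => /and3P [/andP [_ ->] -> _].
by [].
Qed.

Lemma lr_prime T v : is_cherry T v -> v != [::] ->
  l' (T, v) = (size (head [::] (leaf_paths (replace_at T v Leaf)))).-1 /\
  r' (T, v) = (size (last [::] (leaf_paths (replace_at T v Leaf)))).-1.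
Proof.
move=> Hc Hv.
have [A [B [E1 E2]]] := cherry_split Hc.
have U := uniq_lp T; rewrite E1 in U.
have [U1 U2 U3 U4] := uniq4 U.
rewrite /l' /r' /leftmost /rightmost /= !count_between E2 E1.
split.
  case: A E1 E2 U1 U2 {U U3 U4} => [|a A] E1 E2 U1 U2 /=.
    by rewrite between_rcons // size_rcons subn1.
  rewrite (negbTE (notin_between Hc _ _ _)) ?subn0 //.
  - by rewrite E1 mem_head.
  - by apply: contraNneq U1 => <-; rewrite mem_head.
  - by apply: contraNneq U2 => <-; rewrite mem_head.
rewrite !last_cat /=.
case: B E1 E2 U3 U4 {U U1 U2} => [|b B] E1 E2 U3 U4 /=.
  by rewrite between_rcons // size_rcons subn1.
rewrite (negbTE (notin_between Hc _ _ _)) ?subn0 //.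
- by rewrite E1 !mem_cat (mem_last b B) !orbT.
- by apply: contraNneq U3 => <-; rewrite mem_last.
- by apply: contraNneq U4 => <-; rewrite mem_last.
Qed.

Definition Rc (L : seq bool) := take (size L).-2 (behead L).

Lemma Rconf_Rc T : Rconf T = Rc (map isl (leaf_paths T)).
Proof. by rewrite /Rconf /Rc map_take behead_map size_map. Qed.

Lemma Rc_cat x (u w : seq bool) : w != [::] -> Rc (x :: u ++ w) = u ++ take (size w).-1 w.
Proof.
move=> Hw; rewrite /Rc /= size_cat take_cat.
case: w Hw => [|y w] //= _.
rewrite addnS /= ltnNge leq_addr /=; congr (_ ++ _); by rewrite addKn.
Qed.

Section WL.
Variables (R : nzRingType) (a b : R).

Lemma W_hop0 (P S : seq bool) :
  W a b (P ++ [:: true, false & S]) (P ++ [:: false, true & S]) = 1%R.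
Proof.
rewrite /W.
have -> : (P ++ [:: true, false & S] == false :: behead (P ++ [:: true, false & S])) &&
          (P ++ [:: false, true & S] == true :: behead (P ++ [:: true, false & S])) = false.
  case: P => [|x P] //=; apply/negbTE; rewrite !eqseq_cons.
  by case: x => //=; rewrite ?andbF.
set C' := P ++ _; set C := P ++ _.
have -> : (C' == rcons (take (size C').-1 C') true) && (C == rcons (take (size C').-1 C') false) = false.
  apply/negP => /andP [/eqP E1 /eqP E2].
  have H1 : nth false C' (size P) = true by rewrite /C' nth_cat ltnn subnn.
  have H2 : nth false C (size P) = false by rewrite /C nth_cat ltnn subnn.
  have Hs : size P < (size C').-1 by rewrite /C' size_cat /=; lia.
  move: H1 H2; rewrite E1 E2 !nth_rcons size_take.
  have Hlt : (size C').-1 < size C' by rewrite /C' size_cat /=; lia.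
  by rewrite Hlt Hs => ->.
have -> : hop C' C.
  apply/hasP; exists (size P).
    rewrite mem_iota /C' size_cat /=; lia.
  rewrite /C' /C take_size_cat //.
  have -> : drop (size P).+2 (P ++ [:: true, false & S]) = S.
    by rewrite -cat_rcons -cat_rcons drop_size_cat // !size_rcons.
  by rewrite !eqxx.
by [].
Qed.

Lemma W_hop (P S : seq bool) : P != [::] -> S != [::] ->
  W a b (Rc (P ++ [:: true, false & S])) (Rc (P ++ [:: false, true & S])) = 1%R.
Proof.
case: P => [|x P] // _ HS.
rewrite /= !Rc_cat //=.
by case: S HS => [|y S] //= _; exact: W_hop0.
Qed.

Lemma W_beta (Q : seq bool) : Q != [::] ->
  W a b (Rc (Q ++ [:: true; false])) (Rc (Q ++ [:: false; false])) = b.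
Proof.
case: Q => [|x Q] // _.
rewrite /= !Rc_cat //= !cats1 /W.
have -> : (rcons Q true == false :: behead (rcons Q true)) &&
          (rcons Q false == true :: behead (rcons Q true)) = false.
  case: Q => [|y Q] //=; rewrite !eqseq_cons; by case: y; rewrite ?andbF.
by rewrite size_rcons /= -cats1 take_size_cat // cats1 !eqxx.
Qed.

Lemma W_alpha (S : seq bool) : S != [::] ->
  W a b (Rc [:: true, false & S]) (Rc [:: true, true & S]) = a.
Proof.
move=> HS.
rewrite -(cat0s [:: false & S]) -(cat0s [:: true & S]) !Rc_cat //=.
case: S HS => [|y S] //= _.
by rewrite /W /= !eqxx.
Qed.
End WL.

Lemma uniq_pivot (T : eqType) (s1 s2 t1 t2 : seq T) x :
  uniq (s1 ++ x :: s2) -> s1 ++ x :: s2 = t1 ++ x :: t2 -> s1 = t1 /\ s2 = t2.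
Proof.
move=> U E.
have Hs : x \notin s1 by move: U; rewrite cat_uniq /= => /and3P [_ /norP [] ].
have Ht : x \notin t1 by move: U; rewrite E cat_uniq /= => /and3P [_ /norP [] ].
have Hi : size s1 = size t1.
  have := index_pivot s2 Hs; have := index_pivot t2 Ht; rewrite /= E => -> <-. done.
have E1 : s1 = t1 by move/(congr1 (take (size s1))): E; rewrite take_size_cat // Hi take_size_cat.
split => //; subst t1; move/(congr1 (drop (size s1).+1)): E.
by rewrite -!cat_rcons !drop_size_cat // size_rcons.
Qed.

Lemma new_lp T' D1 D2 q : leaf_paths T' = D1 ++ q :: D2 ->
  leaf_paths (replace_at T' q cherry) = D1 ++ [:: rcons q false, rcons q true & D2].
Proof.
move=> E.
have Hq : q \in leaf_paths T' by rewrite E mem_cat mem_head orbT.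
have [A [B [E1 E2]]] := leaf_split (lp_leaf Hq).
have U := uniq_lp T'.
rewrite E in U; rewrite E in E1.
have [-> ->] := uniq_pivot U E1.
by rewrite E2.
Qed.

Lemma cherry_node T p : is_cherry T p -> p != [::] -> exists l r, T = Node l r.
Proof. rewrite /is_cherry; case: T => [|l r]; last by exists l, r. by case: p => [|[] ?]. Qed.

Lemma isr_isl (x : vpath) : x != [::] -> isr x = ~~ isl x.
Proof. by case: x => [|y x] //= _; rewrite /Defs.is_right /Defs.is_left /= negbK. Qed.

Lemma isl_rcons p b : isl (rcons p b) = ~~ b.
Proof. by rewrite /Defs.is_left last_rcons; case: p. Qed.

Lemma isl_ne (p : vpath) : p != [::] -> isl p = ~~ last false p.
Proof. by case: p. Qed.

Lemma last_negb (p : vpath) : all negb p -> last false p = false.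
Proof.
move=> H; have := mem_last false p; rewrite inE => /orP [/eqP -> //|Hm].
by move/allP: H => /(_ _ Hm) /negbTE.
Qed.

Lemma last_id (p : vpath) : all id p -> p != [::] -> last false p = true.
Proof. case: p => [|x p] // H _; exact: (allP H _ (mem_last x p)). Qed.

Lemma cons_rcons (x : bool) D : all (pred1 x) D -> x :: D = rcons D x.
Proof. elim: D => //= y D IH /andP [/eqP -> H]; by rewrite IH. Qed.

Lemma all_rcons (p : vpath) b P : all P (rcons p b) -> all P p.
Proof. by rewrite -cats1 all_cat => /andP []. Qed.

Definition q1 T p :=
  let ps := leaf_paths T in
  let ps' := leaf_paths (replace_at T p Leaf) in
  if rcons p true != last [::] ps then
    let i := index p ps' in nth [::] ps' (i.+1 + find isr (drop i.+1 ps'))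
  else nth [::] (rev ps') (find isl (rev ps')).

Definition q2 T p :=
  let ps := leaf_paths T in
  let ps' := leaf_paths (replace_at T p Leaf) in
  if rcons p false != head [::] ps then
    let i := index p ps' in
    nth [::] (rev (take i ps')) (find isl (rev (take i ps')))
  else nth [::] ps' (find isr ps').

Lemma pi_map_eq T p : p != [::] ->
  pi_map (T, p) = let q := if last false p then q1 T p else q2 T p in
                  (replace_at (replace_at T p Leaf) q cherry, q).
Proof. by case: p => [|x p] //= _; case: (last x p). Qed.

Lemma find_split (X : Type) (x0 : X) (a : pred X) s : has a s ->
  exists s1 s2, [/\ s = s1 ++ nth x0 s (find a s) :: s2, a (nth x0 s (find a s)) & ~~ has a s1].
Proof.
move=> H; exists (take (find a s) s), (drop (find a s).+1 s); split.
- by rewrite -drop_nth ?cat_take_drop // -has_find.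
- exact: nth_find.
- by rewrite has_take // ltnn.
Qed.

Lemma nth_cat_add (X : Type) (x0 : X) s1 s2 k : nth x0 (s1 ++ s2) (size s1 + k) = nth x0 s2 k.
Proof. by rewrite nth_cat ltnNge leq_addr /= addKn. Qed.

Lemma nohas_map (s : seq vpath) : ~~ has isl s -> all (pred1 false) (map isl s).
Proof. move=> H; rewrite all_map; apply/allP => x Hx /=; apply/eqP/negbTE; exact: (hasPn H). Qed.

Lemma nohasr_map (s : seq vpath) : all (fun x => x != [::]) s -> ~~ has isr s -> all (pred1 true) (map isl s).
Proof.
move=> N H; rewrite all_map; apply/allP => x Hx /=; apply/eqP.
by have := hasPn H x Hx; rewrite isr_isl ?negbK // (allP N).
Qed.

Definition shape (ps ps' ps'' : seq vpath) :=
  [\/ exists P S, [/\ P != [::], S != [::], map isl ps = P ++ [:: true, false & S],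
          map isl ps'' = P ++ [:: false, true & S] &
          head [::] ps = head [::] ps' /\ last [::] ps = last [::] ps'],
      exists Q, [/\ Q != [::], map isl ps = Q ++ [:: true; false],
          map isl ps'' = Q ++ [:: false; false] &
          head [::] ps = head [::] ps' /\ last [::] ps = rcons (last [::] ps') true]
    | exists S, [/\ S != [::], map isl ps = [:: true, false & S],
          map isl ps'' = [:: true, true & S] &
          head [::] ps = rcons (head [::] ps') false /\ last [::] ps = last [::] ps']].

Lemma cons_cat_shift (x : bool) D E : all (pred1 x) D -> x :: D ++ E = D ++ x :: E.
Proof. elim: D => //= y D IH /andP [/eqP -> H]; by rewrite IH. Qed.

Lemma pi_case T p : is_cherry T p -> p != [::] ->
  exists q D1 D2, [/\ leaf_paths (replace_at T p Leaf) = D1 ++ q :: D2,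
     (if last false p then q1 T p else q2 T p) = q &
     shape (leaf_paths T) (leaf_paths (replace_at T p Leaf))
           (D1 ++ [:: rcons q false, rcons q true & D2])].
Proof.
move=> Hc Hp.
have [A [B [E1 E2]]] := cherry_split Hc.
have [l [r ET]] := cherry_node Hc Hp.
have NE := lp_nonnil l r; rewrite -ET E1 !all_cat /= in NE.
case/and3P: NE => NA _ NB.
have U := uniq_lp T; rewrite E1 in U; have [U1 U2 U3 U4] := uniq4 U.
have U' := uniq_lp (replace_at T p Leaf); rewrite E2 in U'.
have [UA UB] : p \notin A /\ p \notin B.
  by move: U'; rewrite cat_uniq /= => /and3P [_ /norP [-> _] /andP [-> _]].
have H0 := head_lp T; rewrite E1 in H0.
have HL := last_lp T; rewrite E1 in HL.
have Hpl : isl p = ~~ last false p by rewrite isl_ne.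
rewrite /q1 /q2 /shape E1 E2 (index_pivot B UA).
have HBr : forall b B', all (fun q : vpath => q != [::]) (b :: B') ->
    all id (last [::] (A ++ [:: rcons p false; rcons p true] ++ b :: B')) -> has isr (b :: B').
  move=> b B' N H; apply/hasP; exists (last b B'); first exact: mem_last.
  rewrite last_cat /= in H.
  by rewrite /Defs.is_right last_id //; apply: (allP N); exact: mem_last.
case Hl: (last false p).
-
  have Hpl' : isl p = false by rewrite Hpl Hl.
  case: A E1 E2 NA U U1 U2 U' UA H0 HL HBr => [|a A'] E1 E2 NA U U1 U2 U' UA H0 HL HBr.
    by move: H0 => /= /all_rcons /last_negb; rewrite Hl.
  have Hal : isl a.
    move: H0 => /= H0; rewrite isl_ne ?last_negb //; exact: (allP NA _ (mem_head a A')).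
  have Hhas : has isl (rev (a :: A')) by rewrite has_rev /= Hal.
  case: B E1 E2 NB U U3 U4 U' UB H0 HL HBr => [|b B'] E1 E2 NB U U3 U4 U' UB H0 HL HBr.
  +
    have -> : (rcons p true != last [::] ((a :: A') ++ [:: rcons p false; rcons p true] ++ [::])) = false.
      by rewrite cats0 last_cat /= eqxx.
    rewrite cats1 rev_rcons /= Hpl' /=.
    have [R1 [R2 [ER Hq HR]]] := find_split [::] Hhas.
    set q := nth [::] _ _ in ER Hq *.
    have EA : a :: A' = rev R2 ++ q :: rev R1.
      by rewrite -[a :: A']revK ER rev_cat rev_cons cat_rcons.
    have Hall : all (pred1 false) (map isl (rev R1)) by apply: nohas_map; rewrite has_rev.
    exists q, (rev R2), (rev R1 ++ [:: p]); split.
    * have -> : a :: rcons A' p = rcons (a :: A') p by [].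
      by rewrite EA -cats1 -catA.
    * by [].
    * apply: Or32; exists (map isl (a :: A')); split => //.
      -- by rewrite ?cats0 map_cat /= !isl_rcons.
      -- rewrite EA !map_cat /= !map_cat /= Hpl' -catA /= !isl_rcons Hq /=.
         by rewrite cons_cat_shift.
      -- by rewrite ?cats0 -?cats1 !last_cat.
  +
    have Hl1 : last [::] ((a :: A') ++ [:: rcons p false, rcons p true & b :: B']) = last b B'.
      by rewrite last_cat.
    have -> : (rcons p true != last [::] ((a :: A') ++ [:: rcons p false; rcons p true] ++ b :: B')) = true.
      rewrite Hl1; apply/eqP => E.
      by move: U4; rewrite E mem_last.
    rewrite -[in drop _ _]cat_rcons drop_size_cat ?size_rcons //.
    have [B1 [B2 [EB Hq HB]]] := find_split [::] (HBr _ _ NB HL).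
    set q := nth [::] _ _ in EB Hq *.
    rewrite addSn -addnS nth_cat_add /=.
    have Nq : q != [::] by apply: (allP NB); rewrite EB mem_cat mem_head orbT.
    have Hql : isl q = false by move: Hq; rewrite isr_isl // => /negbTE.
    have NB1 : all (fun q : vpath => q != [::]) B1 by move: NB; rewrite EB all_cat => /andP [].
    have Hall : all (pred1 true) (map isl B1) by apply: nohasr_map.
    exists q, ((a :: A') ++ p :: B1), B2; split.
    * by rewrite EB -catA.
    * by [].
    * apply: Or31; exists (map isl (a :: A')), (map isl (b :: B')); split => //.
      -- by rewrite map_cat /= !isl_rcons.
      -- rewrite EB -catA !map_cat /= Hpl' ?map_cat /= !isl_rcons Hql /=.
         by rewrite -(cons_cat_shift _ Hall).
      -- by rewrite !last_cat.
-
  have Hpl' : isl p = true by rewrite Hpl Hl.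
  have Hpr : isr p = false by rewrite isr_isl // Hpl'.
  case: B E1 E2 NB U U3 U4 U' UB H0 HL HBr => [|b B'] E1 E2 NB U U3 U4 U' UB H0 HL HBr.
    by move: HL; rewrite last_cat /= => /all_rcons /last_id; rewrite Hl => /(_ Hp).
  have [B1 [B2 [EB Hq HB]]] := find_split [::] (HBr _ _ NB HL).
  set q := nth [::] (b :: B') (find isr (b :: B')) in EB Hq *.
  have Nq : q != [::] by apply: (allP NB); rewrite EB mem_cat mem_head orbT.
  have Hql : isl q = false by move: Hq; rewrite isr_isl // => /negbTE.
  have NB1 : all (fun q : vpath => q != [::]) B1 by move: NB; rewrite EB all_cat => /andP [].
  have HallB : all (pred1 true) (map isl B1) by apply: nohasr_map.
  case: A E1 E2 NA U U1 U2 U' UA H0 HL HBr => [|a A'] E1 E2 NA U U1 U2 U' UA H0 HL HBr.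
  +
    rewrite /= eqxx /= Hpr /=.
    exists q, (p :: B1), B2; split.
    * by rewrite EB.
    * by [].
    * apply: Or33; exists (map isl (b :: B')); split => //.
      -- by rewrite /= !isl_rcons.
      -- rewrite EB !map_cat /= Hpl' ?map_cat /= !isl_rcons Hql /=.
         by rewrite -(cons_cat_shift _ HallB).
  +
    have -> : (rcons p false != head [::] ((a :: A') ++ [:: rcons p false; rcons p true] ++ b :: B')) = true.
      rewrite /=; apply/eqP => E.
      by move: U1; rewrite E mem_head.
    rewrite take_size_cat //.
    have Hal : isl a.
      move: H0 => /= H0; rewrite isl_ne ?last_negb //; exact: (allP NA _ (mem_head a A')).
    have Hhas : has isl (rev (a :: A')) by rewrite has_rev /= Hal.
    have [R1 [R2 [ER Hq2 HR]]] := find_split [::] Hhas.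
    set q' := nth [::] (rev _) _ in ER Hq2 *.
    have EA : a :: A' = rev R2 ++ q' :: rev R1.
      by rewrite -[a :: A']revK ER rev_cat rev_cons cat_rcons.
    have Hall : all (pred1 false) (map isl (rev R1)) by apply: nohas_map; rewrite has_rev.
    exists q', (rev R2), (rev R1 ++ p :: b :: B'); split.
    * by rewrite {1}EA -catA.
    * by [].
    * apply: Or31; exists (map isl (a :: A')), (map isl (b :: B')); split => //.
      -- by rewrite map_cat /= !isl_rcons.
      -- rewrite EA !map_cat /= ?map_cat /= !isl_rcons Hq2 /= -catA /=.
         by rewrite Hpl' (cons_cat_shift _ Hall).
      -- by rewrite !last_cat.
Qed.

Lemma head_node l r : exists h, head [::] (leaf_paths (Node l r)) = false :: h.
Proof. have [x [s E]] := lp_cons l; exists x; by rewrite /= E. Qed.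

Lemma last_node l r : exists t, last [::] (leaf_paths (Node l r)) = true :: t.
Proof. have [x [s E]] := lp_cons r; exists (last x s); by rewrite /= E last_cat /= last_map. Qed.

Lemma replace_node l r b p S : exists l' r', replace_at (Node l r) (b :: p) S = Node l' r'.
Proof. case: b; by [exists l, (replace_at r p S) | exists (replace_at l p S), r]. Qed.

Lemma marked_p n T p : (1 <= n) -> marked n (T, p) -> is_cherry T p /\ p != [::].
Proof.
rewrite /marked /= => Hn /andP [/eqP Hs Hc]; split => //.
case: p Hc => // Hc; move: Hc Hs; rewrite /is_cherry /=.
by case: T => [|[|? ?] [|? ?]] //= _ E; lia.
Qed.

Lemma size_between h : size (between h) = (size h).-1.
Proof. by rewrite size_map size_iota. Qed.

Unset Implicit Arguments.
Local Open Scope ring_scope.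

Lemma inv_step (R : fieldType) (x : R) m : x != 0 -> x ^- m = x ^- m.+1 * x.
Proof. move=> Hx; rewrite exprSr invfM -mulrA mulVf ?mulr1 //. Qed.

Lemma partB (R : fieldType) (alpha beta : R) T p : is_cherry T p -> p != [::] ->
  muhat alpha beta (pi_map (T, p)) = muhat alpha beta (T, p).
Proof.
move=> Hc Hp.
have [q [D1 [D2 [E Eq _]]]] := pi_case Hc Hp.
rewrite pi_map_eq // /= Eq.
set T' := replace_at T p Leaf in E *.
have Hq : q \in leaf_paths T' by rewrite E mem_cat mem_head orbT.
have HqL := lp_leaf Hq.
have Hc' : is_cherry (replace_at T' q cherry) q.
  by rewrite /is_cherry subtree_replace // HqL.
have Nq : q != [::].
  have [l [r ET]] := cherry_node Hc Hp.
  have [b [p' Ep]] : exists b p', p = b :: p' by case: (p) Hp => [|b p'] //; exists b, p'.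
  have [l' [r' ET']] := replace_node l r b p' Leaf.
  move: Hq; rewrite /T' ET Ep ET' => Hq; exact: (allP (lp_nonnil l' r') _ Hq).
have [L1 R1] := lr_prime Hc' Nq.
have [L2 R2] := lr_prime Hc Hp.
rewrite /muhat L1 R1 L2 R2 replace_replace ?HqL // replace_id //.
Qed.

Lemma partA (R : fieldType) (alpha beta : R) T p : alpha != 0 -> beta != 0 ->
  is_cherry T p -> p != [::] ->
  muhat alpha beta (T, p) = mu alpha beta T * W alpha beta (Rconf T) (Rconf (pi_map (T, p)).1).
Proof.
move=> Ha Hb Hc Hp.
have [q [D1 [D2 [E Eq Hs]]]] := pi_case Hc Hp.
have [l [r ET]] := cherry_node Hc Hp.
have [b [p' Ep]] : exists b p', p = b :: p' by case: (p) Hp => [|b p'] //; exists b, p'.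
have [l' [r' ET']] := replace_node l r b p' Leaf.
have [h0 Eh] : exists h0, head [::] (leaf_paths (replace_at T p Leaf)) = false :: h0.
  by rewrite ET Ep ET'; exact: head_node.
have [t0 Et] : exists t0, last [::] (leaf_paths (replace_at T p Leaf)) = true :: t0.
  by rewrite ET Ep ET'; exact: last_node.
rewrite pi_map_eq // /= Eq !Rconf_Rc (new_lp E).
have [L R'] := lr_prime Hc Hp.
rewrite /muhat L R' /mu /lT /rT !size_between /leftmost /rightmost.
case: Hs => [[P [S [HP HS -> -> [-> ->]]]] | [Q [HQ -> -> [-> ->]]] | [S [HS -> -> [-> ->]]]].
- by rewrite W_hop // mulr1.
- by rewrite W_beta // size_rcons Et /= (inv_step _ _ _ Hb) mulrA.
- by rewrite W_alpha // size_rcons Eh /= (inv_step _ _ _ Ha) mulrAC.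
Qed.

Theorem mainTheorem6 (R : realFieldType) (n : nat) (alpha beta : R) :
  (1 <= n)%N -> 0 < alpha <= 1 -> 0 < beta <= 1 ->
  (forall C C' : seq bool, size C = n -> size C' = n ->
     forall X : tree * vpath, inF n C' C X ->
       muhat alpha beta X = mu alpha beta (f X) * W alpha beta C' C)
  /\
  (forall X : tree * vpath, marked n X ->
     muhat alpha beta (pi_map X) = muhat alpha beta X).
Proof.
move=> Hn /andP [Ha _] /andP [Hb _].
have Ha' : alpha != 0 by rewrite gt_eqF.
have Hb' : beta != 0 by rewrite gt_eqF.
split.
- move=> C C' _ _ [T p] /and3P [Hm /eqP E1 /eqP E2].
  have [Hc Hp] := marked_p Hn Hm.
  rewrite -E1 -E2 /f /=; exact: partA.
- move=> [T p] Hm; have [Hc Hp] := marked_p Hn Hm; exact: partB.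
Qed.
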